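(* Let $A=\{a_{ij}: i,j\ge1\}$ with $a_{ij}\prec a_{kl}$ iff $j=k$. For a permutation $\sigma\in\mathfrak S_n$ define $$\mathbf S^\sigma(A)=\sum_{i_1,\dots,i_n\ge1}a_{i_{\sigma^{-1}(1)}i_1}a_{i_{\sigma^{-1}(2)}i_2}\cdots a_{i_{\sigma^{-1}(n)}i_n}.$$ Then: (i) $\mathbf S^\sigma(A)$ equals the sum of all words $w_1\cdots w_n$ over $A$ with $w_j\prec w_{\sigma(j)}$ for all $j\in[n]$; (ii) the $\mathbf S^\sigma$, $\sigma$ ranging over all permutations of all $[n]$, $n\ge0$, are linearly independent; (iii) $\mathbf S^\sigma\mathbf S^\tau=\mathbf S^{\sigma\bullet\tau}$; (iv) defining $\mathbf S^\sigma(A\oplus B)$ as the sum of all words $w$ over $A\oplus B$ with $w_j\prec w_{\sigma(j)}$ for all $j$, and letting letters of $A$ commute with those of $B$, $$\mathbf S^\sigma(A\oplus B)=\sum_{C}\mathbf S^{\mathrm{std}(\sigma_{|[n]\setminus U_C})}(A)\,\mathbf S^{\mathrm{std}(\sigma_{|U_C})}(B),$$ the sum over all sets $C$ of cycles of $\sigma$, where $U_C$ is the union of the supports of the cycles in $C$. Thus the span of the $\mathbf S^\sigma$ with coproduct $\Delta F=F(A\oplus B)$ is a Hopf algebra isomorphic to the Grossman–Larson-type cocommutative Hopf algebra $\mathbf{SGSym}$ of permutations.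
   Context: $\sigma\bullet\tau$ denotes shifted concatenation: for $\sigma\in\mathfrak S_n,\tau\in\mathfrak S_m$, the permutation of $[n+m]$ with word $\sigma(1)\cdots\sigma(n)(\tau(1)+n)\cdots(\tau(m)+n)$. $B=\{b_{ij}:i,j\ge1\}$ is a disjoint copy of $A$ with the same relation; $A\oplus B$ is the disjoint union with the relations of $A$ and of $B$ together with $a\prec b$ for all $a\in A$, $b\in B$ (never $b\prec a$). For $U\subseteq[n]$ stable under a function $f$, $\mathrm{std}(f_{|U})=\tau_U\circ f_{|U}\circ\tau_U^{-1}$ where $\tau_U:U\to[|U|]$ is the increasing bijection. $\mathbf{SGSym}$ is the Hopf algebra with basis $\mathbf S^\sigma$ (all permutations), product $\mathbf S^\sigma\mathbf S^\tau=\mathbf S^{\sigma\bullet\tau}$ and coproduct obtained by splitting the set of cycles of $\sigma$ in two parts in all ways and standardizing, as in (iv). *)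

(* Defs.v *)
From HB Require Import structures.
From mathcomp Require Import all_boot all_order all_fingroup all_algebra.
From Stdlib Require Import Classical ClassicalEpsilon.
Set Implicit Arguments. Unset Strict Implicit. Unset Printing Implicit Defensive.
Import GRing.Theory.
Local Open Scope ring_scope.

(* Letters of A: the pair (i, j) : nat * nat stands for a_{i+1, j+1}
   (0-based reindexing of the index set {1,2,...}). *)
Definition letter := (nat * nat)%type.

Definition precA (x y : letter) : bool := x.2 == y.1.

(* Letters of A (+) B: inl = letter of A, inr = letter of B. *)
Definition letterAB := (letter + letter)%type.
Definition precAB (x y : letterAB) : bool :=
  match x, y with
  | inl a, inl a' => precA a a'
  | inr b, inr b' => precA b b'
  | inl _, inr _ => true
  | inr _, inl _ => false
  end.

Definition series (K : nzRingType) (W : Type) := W -> K.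

(* Formal sum of a locally finite family of monomials f : I -> W (each
   with coefficient 1): the coefficient of w is the number of indices i
   with f i = w (0 if that preimage is infinite, which never happens for
   the families used below). *)
Definition preim_enum (I W : eqType) (f : I -> W) (w : W) (l : seq I) : Prop :=
  uniq l /\ forall i, i \in l <-> f i = w.

Definition fam_coef (I W : eqType) (f : I -> W) (w : W) : nat :=
  match excluded_middle_informative (exists l, preim_enum f w l) with
  | left H => size (proj1_sig (constructive_indefinite_description _ H))
  | right _ => 0%N
  end.

Definition fam_sum (K : nzRingType) (I W : eqType) (f : I -> W) : series K W :=
  fun w => (fam_coef f w)%:R.

Definition monoS n (s : 'S_n) (i : n.-tuple nat) : seq letter :=
  [seq (tnth i ((s^-1)%g k), tnth i k) | k <- enum 'I_n].

Definition SA (K : nzRingType) n (s : 'S_n) : series K (seq letter) :=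
  fam_sum K (@monoS n s).

Definition condS (T : Type) (prec : T -> T -> bool) (x0 : T) n (s : 'S_n)
  (w : seq T) : bool :=
  (size w == n) && [forall j : 'I_n, prec (nth x0 w j) (nth x0 w (s j))].

Definition sermul (K : nzRingType) (T : Type) (F G : series K (seq T))
  : series K (seq T) :=
  fun w => \sum_(i < (size w).+1) F (take i w) * G (drop i w).

Definition pcat_fun n m (s : 'S_n) (t : 'S_m) (i : 'I_(n + m)) : 'I_(n + m) :=
  match split i with
  | inl j => lshift m (s j)
  | inr k => rshift n (t k)
  end.

Lemma pcat_inj n m (s : 'S_n) (t : 'S_m) : injective (pcat_fun s t).
Proof.
move=> i j; rewrite /pcat_fun.
case: splitP => a Ha; case: splitP => b Hb /(congr1 val) /= E; apply/val_inj/eqP; rewrite /= Ha Hb; apply/eqP.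
- by rewrite (perm_inj (val_inj E)).
- by have := ltn_ord (s a); rewrite E ltnNge leq_addr.
- by have := ltn_ord (s b); rewrite -E ltnNge leq_addr.
- by move/addnI/val_inj/perm_inj: E => ->.
Qed.

Definition pcat n m (s : 'S_n) (t : 'S_m) : 'S_(n + m) := perm (@pcat_inj n m s t).

Definition mk_perm (T : finType) (g : T -> T) : {perm T} :=
  match @injectiveP T T g with
  | ReflectT H => perm H
  | ReflectF _ => 1%g
  end.

(* std(s_{|U}) = tau_U o s_{|U} o tau_U^{-1}, tau_U : U -> [|U|] increasing
   (enum of a set of ordinals is increasing). Meaningful for s-stable U. *)
Definition std_fun n (s : 'S_n) (U : {set 'I_n}) (k : 'I_#|U|) : 'I_#|U| :=
  enum_rank_in (enum_valP k) (s (enum_val k)).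

Definition std n (s : 'S_n) (U : {set 'I_n}) : 'S_#|U| := mk_perm (@std_fun n s U).

(* Image in the algebra where letters of A commute with letters of B:
   a word over A (+) B is sent to (its A-subword, its B-subword). *)
Definition projAB (w : seq letterAB) : seq letter * seq letter :=
  (pmap (fun x => if x is inl a then Some a else None) w,
   pmap (fun x => if x is inr b then Some b else None) w).

Definition SAB (K : nzRingType) n (s : 'S_n)
  : series K (seq letter * seq letter) :=
  fam_sum K (fun w : {w : seq letterAB | condS precAB (inl (0%N,0%N)) s w} =>
               projAB (val w)).

(* Main.v *)
Require Import Defs.
From HB Require Import structures.
From mathcomp Require Import all_boot all_order all_fingroup all_algebra.
From Stdlib Require Import FunctionalExtensionality Classical ClassicalEpsilon.
Import GRing.Theory.
Local Open Scope ring_scope.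

Lemma fam_coefE (I W : eqType) (f : I -> W) (w : W) (l : seq I) :
  uniq l -> (forall i, i \in l <-> f i = w) -> fam_coef f w = size l.
Proof.
move=> ul Hl; rewrite /fam_coef.
case: excluded_middle_informative => [H|]; last first.
  by case; exists l.
case: (constructive_indefinite_description _ H) => l' [ul' Hl'] /=.
apply: perm_size; apply: uniq_perm => // i.
by apply/idP/idP => [/Hl' /Hl|/Hl /Hl'].
Qed.

Definition itup n (w : seq letter) : n.-tuple nat := [tuple (nth (0%N,0%N) w i).2 | i < n].

Lemma monoS_eq n (s : 'S_n) (i : n.-tuple nat) w :
  (monoS s i = w) <-> (condS precA (0%N,0%N) s w /\ i = itup n w).
Proof.
split.
  move=> <-; have sz : size (monoS s i) = n by rewrite size_map size_enum_ord.
  have nt : forall k : 'I_n, nth (0%N,0%N) (monoS s i) k = (tnth i ((s^-1)%g k), tnth i k).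
    by move=> k; rewrite (nth_map k) ?size_enum_ord // nth_ord_enum.
  split.
    rewrite /condS sz eqxx /=; apply/forallP => j.
    by rewrite /precA !nt /= permK.
  by apply: eq_from_tnth => k; rewrite tnth_mktuple nt.
move=> [/andP [/eqP sz /forallP c] ->].
apply: (@eq_from_nth _ (0%N,0%N)); first by rewrite size_map size_enum_ord sz.
move=> k; rewrite size_map size_enum_ord => kn.
rewrite (nth_map (Ordinal kn)) ?size_enum_ord //.
have -> : nth (Ordinal kn) (enum 'I_n) k = Ordinal kn.
  by rewrite -[k]/(val (Ordinal kn)) nth_ord_enum.
rewrite !tnth_mktuple /=.
have := c ((s^-1)%g (Ordinal kn)); rewrite /precA permKV => /eqP ->.
by case: (nth _ w k).
Qed.

Lemma part1 (K : nzRingType) n (s : 'S_n) (w : seq letter) :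
  SA K s w = (condS precA (0%N, 0%N) s w)%:R.
Proof.
rewrite /SA /fam_sum.
case c: (condS precA (0%N,0%N) s w).
  rewrite (@fam_coefE _ _ _ _ [:: itup n w]) //= => i.
  by rewrite inE; split => [/eqP ->|/monoS_eq [_ ->]] //; apply/monoS_eq.
rewrite (@fam_coefE _ _ _ _ [::]) //= => i; split => // /monoS_eq [].
by rewrite c.
Qed.

Definition wsig n (s : 'S_n) : seq letter := [seq (val j, val (s j)) | j <- enum 'I_n].
Arguments wsig {n}.

Lemma cond_wsig n (s : 'S_n) (p : {n : nat & 'S_n}) :
  condS precA (0%N,0%N) (tagged p) (wsig s) = (p == existT _ n s).
Proof.
case: p => n' t /=; rewrite /condS size_map size_enum_ord.
case: (eqVneq n' n) => [e|ne]; last first.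
   apply/esym/negP => /eqP [] e; by rewrite e eqxx in ne.
subst n'; rewrite /=.
have nt : forall k : 'I_n, nth (0%N,0%N) (wsig s) k = (val k, val (s k)).
  by move=> k; rewrite (nth_map k) ?size_enum_ord // nth_ord_enum.
apply/forallP/idP => [c|/eqP e j].
  rewrite -/(Tagged _ t) eq_Tagged /=; apply/eqP/permP => j.
  by have := c j; rewrite /precA !nt /= => /eqP/val_inj.
have -> : t = s by move: e => /eqP; rewrite -/(Tagged _ t) eq_Tagged => /eqP.
by rewrite /precA !nt.
Qed.

Lemma part2 (K : fieldType) (ps : seq {n : nat & 'S_n}) (c : {n : nat & 'S_n} -> K) :
      uniq ps ->
      (forall w : seq letter, \sum_(p <- ps) c p * SA K (tagged p) w = 0) ->
      forall p, p \in ps -> c p = 0.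
Proof.
move=> u H [n s] ps_p.
have := H (wsig s); rewrite (bigD1_seq _ ps_p u) /= big1_seq.
  by rewrite part1 (@cond_wsig n s (existT _ n s)) eqxx mulr1 addr0.
move=> q /andP [nq _]; by rewrite part1 cond_wsig (negPf nq) mulr0.
Qed.

Lemma cond_pcat (T : Type) (prec : T -> T -> bool) x0 n m (s : 'S_n) (t : 'S_m) w :
  size w = (n + m)%N ->
  condS prec x0 (pcat s t) w = condS prec x0 s (take n w) && condS prec x0 t (drop n w).
Proof.
move=> sz; rewrite /condS sz eqxx size_drop sz addKn size_takel ?sz ?leq_addr //.
rewrite !eqxx /=.
apply/forallP/andP => [c|[/forallP c1 /forallP c2] j].
  split; apply/forallP => j.
    have := c (lshift m j); rewrite /pcat permE /pcat_fun -[lshift m j]/(unsplit (inl j)) unsplitK /=.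
    by rewrite !nth_take.
  have := c (rshift n j); rewrite /pcat permE /pcat_fun -[rshift n j]/(unsplit (inr j)) unsplitK /=.
  by rewrite !nth_drop.
rewrite /pcat permE /pcat_fun; case: splitP => [a|b] ->.
  by have := c1 a; rewrite !nth_take.
by have := c2 b; rewrite !nth_drop.
Qed.

Lemma condS_size (T : Type) (prec : T -> T -> bool) x0 n (s : 'S_n) w :
  condS prec x0 s w -> size w = n.
Proof. by case/andP => /eqP. Qed.
Arguments condS_size {T prec x0 n s w}.

Lemma part3 (K : nzRingType) n m (s : 'S_n) (t : 'S_m) :
      sermul (SA K s) (SA K t) = SA K (pcat s t).
Proof.
apply: functional_extensionality => w; rewrite /sermul part1.
under eq_bigr => i _ do rewrite !part1 -natrM.
case: (leqP n (size w)) => nw; last first.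
  rewrite big1; last first.
    move=> i _; case c: (condS _ _ s _) => //=.
    move: (condS_size c); rewrite size_takel; last by rewrite -ltnS.
  move=> e.
    by move: nw; rewrite -e ltnNge -ltnS ltn_ord.
  case c: (condS _ _ (pcat s t) _) => //.
  by move: (condS_size c) nw => ->; rewrite ltnNge leq_addr.
have nl : (n < (size w).+1)%N by [].
rewrite (bigD1 (Ordinal nl)) //= big1 ?addr0; last first.
  move=> i ni; case c: (condS _ _ s _) => //=.
  move: (condS_size c); rewrite size_takel; last by rewrite -ltnS.
  move=> e.
  by move: ni; rewrite -val_eqE /= e eqxx.
case: (eqVneq (size w) (n + m)%N) => sz.
  by rewrite cond_pcat // mulnb.
rewrite mulnb; case c: (condS precA _ (pcat s t) w); first by rewrite (condS_size c) eqxx in sz.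
case c2: (condS precA _ t _); last by rewrite andbF.
move: (condS_size c2); rewrite size_drop => e.
by move: sz; rewrite -e subnKC ?eqxx.
Qed.

Definition isr (x : letterAB) : bool := if x is inr _ then true else false.
Definition unl (x : letterAB) : letter := if x is inl a then a else (0%N,0%N).
Definition unr (x : letterAB) : letter := if x is inr a then a else (0%N,0%N).

Fixpoint interleave (m : seq bool) (u v : seq letter) : seq letterAB :=
  match m with
  | [::] => [::]
  | b :: m' => if b then inr (head (0%N,0%N) v) :: interleave m' u (behead v)
               else inl (head (0%N,0%N) u) :: interleave m' (behead u) v
  end.

Lemma interleaveK w : interleave (map isr w) (projAB w).1 (projAB w).2 = w.
Proof. by elim: w => [|[a|b] w IH] //=; rewrite /projAB /= in IH *; rewrite IH. Qed.

Lemma isr_interleave m u v : map isr (interleave m u v) = m.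
Proof. by elim: m u v => [|[] m IH] u v //=; rewrite IH. Qed.

Lemma size_interleave m u v : size (interleave m u v) = size m.
Proof. by rewrite -(size_map isr) isr_interleave. Qed.

Lemma proj_interleave m u v : count negb m = size u -> count id m = size v ->
  projAB (interleave m u v) = (u, v).
Proof.
elim: m u v => [|[] m IH] u v /=.
- by case: u => //; case: v.
- case: v => // y v /= e1 [] e2; have := IH u v e1 e2.
  by rewrite /projAB /= => [[-> ->]].
- case: u => // y u /= [] e1 e2; have := IH u v e1 e2.
  by rewrite /projAB /= => [[-> ->]].
Qed.

Lemma proj1E w : (projAB w).1 = map unl (filter (predC isr) w).
Proof. by rewrite /projAB /=; elim: w => [|[a|b] w IH] //=; rewrite IH. Qed.
Lemma proj2E w : (projAB w).2 = map unr (filter isr w).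
Proof. by rewrite /projAB /=; elim: w => [|[a|b] w IH] //=; rewrite IH. Qed.

Lemma enum_ordE n : [seq val j | j <- enum 'I_n] = iota 0 n.
Proof. by rewrite val_enum_ord. Qed.

Lemma map_nth_ord (T : Type) (x0 : T) n (w : seq T) : size w = n ->
  [seq nth x0 w (val j) | j <- enum 'I_n] = w.
Proof.
move=> sz; rewrite (map_comp (nth x0 w) val) enum_ordE -sz.
by rewrite map_nth_iota0 // take_size.
Qed.

Lemma enum_setE' n (P : pred 'I_n) : enum [set j | P j] = filter P (enum 'I_n).
Proof.
rewrite /enum_mem -filter_predI; apply: eq_filter => j /=; rewrite in_set; by case: (P j).
Qed.

Lemma filter_nth (T : Type) (x0 : T) n (w : seq T) (p : pred T) : size w = n ->
  filter p w = [seq nth x0 w (val j) | j <- enum [set j : 'I_n | p (nth x0 w j)]].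
Proof.
move=> sz; by rewrite enum_setE' -filter_map (map_nth_ord _ x0 _ _ sz).
Qed.

Lemma count_enum n (B : {set 'I_n}) : count (mem B) (enum 'I_n) = #|B|.
Proof. by rewrite enumT cardE /enum_mem size_filter. Qed.

Set Implicit Arguments.

Definition stable n (s : 'S_n) (U : {set 'I_n}) := forall j, (s j \in U) = (j \in U).

Lemma stdE n (s : 'S_n) (U : {set 'I_n}) : stable s U ->
  forall k, enum_val (std s U k) = s (enum_val k).
Proof.
move=> st.
have ev : forall k : 'I_#|U|, enum_val (std_fun s k) = s (enum_val k).
  move=> k; rewrite /std_fun enum_rankK_in //.

  by rewrite st enum_valP.
have inj : injective (@std_fun n s U).
  by move=> k1 k2 e; apply: enum_val_inj; apply: (@perm_inj _ s); rewrite -!ev e.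
move=> k; rewrite /std /mk_perm; case: injectiveP => [H|[]] //.
by rewrite permE.
Qed.

Lemma cond_sub (T : Type) (prec : T -> T -> bool) x0 n (s : 'S_n) (U : {set 'I_n})
  (f : 'I_n -> T) : stable s U ->
  condS prec x0 (std s U) [seq f j | j <- enum U] = [forall j in U, prec (f j) (f (s j))].
Proof.
move=> st; rewrite /condS size_map -cardE eqxx /=.
have nt : forall k : 'I_#|U|, nth x0 [seq f j | j <- enum U] k = f (enum_val k).
  move=> k; rewrite (nth_map (enum_val k)) -?cardE ?ltn_ord //.
  by rewrite /enum_val; congr f; apply: set_nth_default; rewrite -cardE ltn_ord.
apply/forallP/forallP => [c j|c k].
  apply/implyP => jU; have := c (enum_rank_in jU j).
  by rewrite !nt stdE // enum_rankK_in.
by rewrite !nt stdE //; have := c (enum_val k); rewrite enum_valP.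
Qed.

Lemma orbit_closed n (s : 'S_n) (U : {set 'I_n}) :
  (forall j, j \in U -> s j \in U) -> forall j y, j \in U -> y \in porbit s j -> y \in U.
Proof.
move=> cl j y jU /porbitP [i ->]; elim: i => [|i IH]; first by rewrite expg0 perm1.
by rewrite expgSr permM; apply: cl.
Qed.

Lemma closed_stable n (s : 'S_n) (U : {set 'I_n}) :
  (forall j, j \in U -> s j \in U) -> stable s U.
Proof.
move=> cl j; apply/idP/idP; last exact: cl.
move=> sj; apply: (orbit_closed cl sj).
by rewrite porbit_sym -(expg1 s) mem_porbit.
Qed.

Lemma stableC n (s : 'S_n) (U : {set 'I_n}) : stable s U -> stable s (~: U).
Proof. by move=> st j; rewrite !in_setC st. Qed.

Lemma cover_stable n (s : 'S_n) (C : {set {set 'I_n}}) :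
  C \subset porbits s -> stable s (cover C).
Proof.
move=> sub; apply: closed_stable => j /bigcupP [X XC jX].
apply/bigcupP; exists X => //.
have := subsetP sub X XC => /imsetP [x _ Xe]; rewrite Xe in jX *; move: jX => /porbitP [i ->].
by rewrite -permM -expgSr mem_porbit.
Qed.

Lemma cover_orbits n (s : 'S_n) (U : {set 'I_n}) :
  (forall j, j \in U -> s j \in U) ->
  cover [set X in porbits s | X \subset U] = U.
Proof.
move=> cl; apply/setP => x; apply/bigcupP/idP => [[X] |xU].
  by rewrite inE => /andP [_ /subsetP XU] /XU.
exists (porbit s x); last exact: porbit_id.
rewrite inE imset_f //=; apply/subsetP => y; exact: orbit_closed.
Qed.

Lemma cover_inj n (s : 'S_n) (C1 C2 : {set {set 'I_n}}) :
  C1 \subset porbits s -> C2 \subset porbits s -> cover C1 = cover C2 -> C1 = C2.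
Proof.
have H : forall C1 C2 : {set {set 'I_n}}, C1 \subset porbits s -> C2 \subset porbits s ->
   cover C1 = cover C2 -> C1 \subset C2.
  move=> D1 D2 s1 s2 e; apply/subsetP => X X1.
  have := subsetP s1 X X1 => /imsetP [x _ Xe].
  have : x \in cover D1 by apply/bigcupP; exists X => //; rewrite Xe porbit_id.
  rewrite e => /bigcupP [Y Y2 xY].
  have := subsetP s2 Y Y2 => /imsetP [y _ Ye].
  suff -> : X = Y by [].
  by rewrite Xe Ye; apply/eqP; rewrite eq_porbit_mem -Ye.
move=> s1 s2 e; apply/eqP; rewrite eqEsubset; apply/andP; split; exact: H.
Qed.

Set Implicit Arguments.

Notation xl := (inl (0%N,0%N) : letterAB).
Notation x0 := ((0%N,0%N) : letter).

Definition Uw n (w : seq letterAB) : {set 'I_n} := [set j : 'I_n | isr (nth xl w j)].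

Lemma proj1_sub n (w : seq letterAB) : size w = n ->
  (projAB w).1 = [seq unl (nth xl w (val j)) | j : 'I_n <- enum (~: Uw n w)].
Proof.
move=> sz; rewrite proj1E (filter_nth _ xl _ _ (predC isr) sz) -map_comp.
have -> : [set j : 'I_n | (predC isr) (nth xl w j)] = ~: Uw n w.
  by apply/setP=> j; rewrite !inE.
by [].
Qed.

Lemma proj2_sub n (w : seq letterAB) : size w = n ->
  (projAB w).2 = [seq unr (nth xl w (val j)) | j : 'I_n <- enum (Uw n w)].
Proof.
move=> sz; rewrite proj2E (filter_nth _ xl _ _ isr sz) -map_comp //.
Qed.

Lemma key n (s : 'S_n) (w : seq letterAB) : size w = n ->
  condS precAB xl s w <->
  [/\ stable s (Uw n w), condS precA x0 (std s (~: Uw n w)) (projAB w).1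
     & condS precA x0 (std s (Uw n w)) (projAB w).2].
Proof.
move=> sz; rewrite (@proj1_sub n w sz) (@proj2_sub n w sz).
split.
  case/andP => _ /forallP c.
  have cl : forall j, j \in Uw n w -> s j \in Uw n w.
    move=> j; rewrite !inE; move: (c j).
    by case: (nth xl w j) => a; case: (nth xl w (s j)) => b.
  have st := closed_stable cl.
  split => //; [rewrite cond_sub; last exact: stableC | rewrite cond_sub //];
    apply/forallP => j; apply/implyP.

    rewrite in_setC => h; have h' : s j \notin Uw n w by rewrite st.
    move: h h'; rewrite !inE; move: (c j).
    by case: (nth xl w j) => a; case: (nth xl w (s j)) => b.
  move=> h; have h' : s j \in Uw n w by rewrite st.
  move: h h'; rewrite !inE; move: (c j).
  by case: (nth xl w j) => a; case: (nth xl w (s j)) => b.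
case=> st; rewrite cond_sub; last exact: stableC.
rewrite cond_sub // => /forallP c1 /forallP c2.
rewrite /condS sz eqxx /=; apply/forallP => j.
move: (c1 j) (c2 j) (st j); rewrite in_setC !inE.
by case: (nth xl w j) => a; case: (nth xl w (s j)) => b //=.
Qed.

Set Implicit Arguments.

Definition maskC n (C : {set {set 'I_n}}) : seq bool := [seq j \in cover C | j <- enum 'I_n].

Lemma Uw_map n (w : seq letterAB) (U : {set 'I_n}) : size w = n ->
  map isr w = [seq j \in U | j <- enum 'I_n] -> Uw n w = U.
Proof.
move=> sz e; apply/setP => j; rewrite inE.
have := congr1 (nth false ^~ j) e.
by rewrite (nth_map xl) ?sz // (nth_map j) ?size_enum_ord // nth_ord_enum.
Qed.

Lemma map_Uw n (w : seq letterAB) : size w = n ->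
  map isr w = [seq j \in Uw n w | j <- enum 'I_n].
Proof.
move=> sz; rewrite -{1}(map_nth_ord _ xl _ _ sz) -map_comp; apply: eq_map => j /=.
by rewrite inE.
Qed.

Lemma part4 (K : nzRingType) n (s : 'S_n) (u v : seq letter) :
      SAB K s (u, v) =
      \sum_(C in powerset (porbits s))
         SA K (std s (~: cover C)) u * SA K (std s (cover C)) v.
Proof.
set A := powerset (porbits s).
pose P C := condS precA x0 (std s (~: cover C)) u && condS precA x0 (std s (cover C)) v.
pose sW := [seq interleave (maskC C) u v | C <- filter P (enum A)].
have szm : forall C : {set {set 'I_n}}, size (interleave (maskC C) u v) = n.
  by move=> C; rewrite size_interleave size_map size_enum_ord.
have UwC : forall C : {set {set 'I_n}}, Uw n (interleave (maskC C) u v) = cover C.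
  by move=> C; apply: Uw_map => //; rewrite isr_interleave.
have F1 : forall C : {set {set 'I_n}}, C \in A -> P C ->
    condS precAB xl s (interleave (maskC C) u v) /\ projAB (interleave (maskC C) u v) = (u, v).
  move=> C CA /andP [c1 c2].
  have pr : projAB (interleave (maskC C) u v) = (u, v).
    apply: proj_interleave.
      rewrite count_map (condS_size c1) -count_enum.
      by apply: eq_count => j; rewrite !inE.
    by rewrite count_map (condS_size c2) -count_enum.
  split => //; apply/(@key n s _ (szm C)); rewrite UwC pr; split => //.
  by apply: cover_stable; rewrite -powersetE.
rewrite /SAB /fam_sum.
rewrite (@fam_coefE _ _ _ _ (pmap insub sW)); last 2 first.
- apply: pmap_sub_uniq; rewrite map_inj_in_uniq; first by apply: filter_uniq; apply: enum_uniq.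
  move=> C1 C2; rewrite mem_filter mem_enum mem_filter mem_enum => /andP [_ C1A] /andP [_ C2A] e.
  apply: (@cover_inj _ s); rewrite -?powersetE //.
  by rewrite -(UwC C1) -(UwC C2) e.
- move=> [w cw] /=; rewrite mem_pmap_sub /=; split.
    case/mapP => C; rewrite mem_filter mem_enum => /andP [PC CA] ->.
    by case: (F1 C CA PC).
  move=> pw.
  have sz := condS_size cw.
  have [st c1 c2] := (@key n s w sz).1 cw.
  have cl : forall j, j \in Uw n w -> s j \in Uw n w by move=> j; rewrite st.
  pose C := [set X in porbits s | X \subset Uw n w].
  have cC : cover C = Uw n w by apply: cover_orbits.
  apply/mapP; exists C.
    rewrite mem_filter mem_enum powersetE; apply/andP; split.
      by rewrite /P cC; rewrite pw /= in c1 c2; rewrite c1 c2.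
    by apply/subsetP => X; rewrite inE => /andP [].
  by rewrite -{1}(interleaveK w) pw /= /maskC cC (@map_Uw n w sz).
rewrite size_pmap_sub.
have -> : count (fun w => condS precAB xl s w) sW = size sW.
  apply/eqP; rewrite -all_count; apply/allP => w /mapP [C].
  rewrite mem_filter mem_enum => /andP [PC CA] ->; by case: (F1 C CA PC).
rewrite size_map size_filter.
under eq_bigr => C _ do rewrite !part1 -natrM mulnb.
rewrite -natr_sum; congr (_ %:R).
rewrite -sum1_count big_enum_cond /=.
rewrite [LHS]big_mkcond [RHS]big_mkcond /=; apply: eq_bigr => C _; rewrite /P.
by case: (C \in A); case: (condS _ _ _ u); case: (condS _ _ _ v).
Qed.


Unset Implicit Arguments.

Theorem theorem4p1 (K : fieldType) :
  (* (i) *)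
  (forall n (s : 'S_n) (w : seq letter),
      SA K s w = (condS precA (0%N, 0%N) s w)%:R) /\
  (* (ii) linear independence over K of all S^s, s in S_n, n >= 0 *)
  (forall (ps : seq {n : nat & 'S_n}) (c : {n : nat & 'S_n} -> K),
      uniq ps ->
      (forall w : seq letter, \sum_(p <- ps) c p * SA K (tagged p) w = 0) ->
      forall p, p \in ps -> c p = 0) /\
  (* (iii) *)
  (forall n m (s : 'S_n) (t : 'S_m),
      sermul (SA K s) (SA K t) = SA K (pcat s t)) /\
  (* (iv) *)
  (forall n (s : 'S_n) (u v : seq letter),
      SAB K s (u, v) =
      \sum_(C in powerset (porbits s))
         SA K (std s (~: cover C)) u * SA K (std s (cover C)) v).
Proof.
split; first by move=> n s w; apply: part1.
split; first exact: part2.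
split; first by move=> n m s t; apply: part3.
by move=> n s u v; apply: part4.
Qed.
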